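(* (a) Let $x\in P$ and $(y,v')\in\mathcal{P}$ with $x\neq y$ and $v'\notin x'^{\perp}$ in $S'$. Then $d(x,(y,v'))=3$ in $\mathbb{S}$. (b) Let $u'\in P'$ and $(y,v')\in\mathcal{P}$ with $u'\neq v'$ and $y\notin u^{\perp}$ in $S$. Then $d(u',(y,v'))=3$ in $\mathbb{S}$.
   Context: Let $S=(P,L)$ and $S'=(P',L')$ be generalized quadrangles of order $(2,2)$ (every line has 3 points, every point lies on 3 lines, and for each point $x$ and line $l\not\ni x$ exactly one point of $l$ is collinear with $x$), with an isomorphism $x\mapsto x'$ from $S$ to $S'$ (write $u$ for the preimage of $u'\in P'$). In a point-line geometry, $x^{\perp}$ is $x$ together with all points collinear with $x$, and $A^{\perp}=\bigcap_{a\in A}a^{\perp}$. A triad is a set of three pairwise non-collinear points, complete if $|T^{\perp}|=3$. Let $\mathcal{P}=\{(x,y')\in P\times P':y'\in x'^{\perp}\}$ and $\mathcal{L}$ the set of all $3$-subsets $\{(x,u'),(y,v'),(z,w')\}$ of $\mathcal{P}$ where $T=\{x,y,z\}$ (three distinct points) is a line or complete triad of $S$ and $\{u',v',w'\}=T'^{\perp}$ in $S'$ with $u',v',w'$ distinct. The geometry $\mathbb{S}=(\mathbb{P},\mathbb{L})$ has point set $\mathbb{P}=\mathcal{P}\cup P\cup P'$ (disjoint union) and line set $\mathcal{L}\cup\{\{x,(x,u'),u'\}:(x,u')\in\mathcal{P}\}$. Distance $d$ is in the collinearity graph of $\mathbb{S}$. *)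

(* Defs.v *)
From mathcomp Require Import all_boot.
Set Implicit Arguments. Unset Strict Implicit. Unset Printing Implicit Defensive.

Definition collinear (T : finType) (L : {set {set T}}) (x y : T) : bool :=
  (x != y) && [exists l in L, (x \in l) && (y \in l)].

Definition perp (T : finType) (L : {set {set T}}) (x : T) : {set T} :=
  [set y | (y == x) || collinear L x y].

Definition perpS (T : finType) (L : {set {set T}}) (A : {set T}) : {set T} :=
  \bigcap_(a in A) perp L a.

Definition is_GQ22 (T : finType) (L : {set {set T}}) : Prop :=
  [/\ (forall l, l \in L -> #|l| = 3),
      (forall x : T, #|[set l in L | x \in l]| = 3)
    & (forall (x : T) l, l \in L -> x \notin l ->
         #|[set y in l | collinear L x y]| = 1)].

Definition triad (T : finType) (L : {set {set T}}) (A : {set T}) : bool :=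
  (#|A| == 3) && [forall x in A, forall y in A, ~~ collinear L x y].

Definition complete_triad (T : finType) (L : {set {set T}}) (A : {set T}) : bool :=
  triad L A && (#|perpS L A| == 3).

Definition BPt (P P' : finType) : finType := ((P + P') + (P * P'))%type.

(* the set calP = {(x,y') | y' in x'^perp} *)
Definition calP (P P' : finType) (L' : {set {set P'}}) (f : P -> P')
  : {set P * P'} := [set p | p.2 \in perp L' (f p.1)].

Definition calL (P P' : finType) (L : {set {set P}}) (L' : {set {set P'}})
  (f : P -> P') : {set {set P * P'}} :=
  [set B : {set P * P'} |
     [&& #|B| == 3, B \subset calP L' f,
         #|[set p.1 | p in B]| == 3,
         ([set p.1 | p in B] \in L) || complete_triad L [set p.1 | p in B],
         [set p.2 | p in B] == perpS L' (f @: [set p.1 | p in B])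
       & #|[set p.2 | p in B]| == 3]].

Definition bigL (P P' : finType) (L : {set {set P}}) (L' : {set {set P'}})
  (f : P -> P') : {set {set BPt P P'}} :=
  [set (@inr (P + P') (P * P')) @: B | B : {set P * P'} in calL L L' f]
  :|: [set [set (inl (inl p.1) : BPt P P'); inr p; inl (inr p.2)] | p in calP L' f].

Definition dist_is (T : finType) (e : rel T) (a b : T) (n : nat) : Prop :=
  (exists s : seq T, [/\ size s = n, path e a s & last a s = b]) /\
  (forall s : seq T, size s < n -> path e a s -> last a s != b).

(* Main.v *)
Require Import Defs.
From mathcomp Require Import all_boot.
Set Implicit Arguments. Unset Strict Implicit. Unset Printing Implicit Defensive.

Lemma collinearC (T : finType) (L : {set {set T}}) x y :
  collinear L x y = collinear L y x.
Proof.
rewrite /collinear eq_sym; congr (_ && _).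
by apply/existsP/existsP => [][l /andP [hl /andP [h1 h2]]]; exists l; rewrite hl h1 h2.
Qed.

Lemma perp_refl (T : finType) (L : {set {set T}}) a : a \in perp L a.
Proof. by rewrite inE eqxx. Qed.

Lemma perpC (T : finType) (L : {set {set T}}) a b : (a \in perp L b) = (b \in perp L a).
Proof. by rewrite !inE eq_sym collinearC. Qed.

Lemma gq_common (T : finType) (L : {set {set T}}) a b :
  is_GQ22 L -> a != b -> exists c, c \in perp L a /\ c \in perp L b.
Proof.
case=> _ hpt hax nab.
have [cab|ncab] := boolP (collinear L a b).
  by exists a; rewrite perp_refl inE collinearC cab orbT.
have /card_gt0P [l] : 0 < #|[set l in L | b \in l]| by rewrite hpt.
rewrite inE => /andP [hl hb].
have anl : a \notin l.
  apply/negP => ha; move/negP: ncab; apply.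
  by rewrite /collinear nab; apply/existsP; exists l; rewrite hl ha hb.
have /card_gt0P [c] : 0 < #|[set y in l | collinear L a y]| by rewrite hax.
rewrite inE => /andP [hc cac]; exists c; split.
  by rewrite inE cac orbT.
rewrite inE; case: eqP => //= /eqP ncb.
by rewrite /collinear eq_sym ncb; apply/existsP; exists l; rewrite hl hb hc.
Qed.

Lemma transl (P P' : finType) (L : {set {set P}}) (L' : {set {set P'}})
  (f : P -> P') (g : P' -> P) : cancel f g -> cancel g f ->
  L' = [set f @: l | l : {set P} in L] -> forall y u',
  u' \in perp L' (f y) -> y \in perp L (g u').
Proof.
move=> fK gK EL y u'; rewrite !inE => /orP [/eqP -> | ]; first by rewrite fK eqxx.
case/andP => ne /existsP [l /andP [hl /andP [h1 h2]]].
rewrite EL in hl; case/imsetP: hl => m hm El; subst l.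
case/imsetP: h1 => a ha /(can_inj fK) Ea; subst a.
case/imsetP: h2 => b hb Eb; subst u'.
rewrite fK; apply/orP; right.
rewrite /collinear; apply/andP; split.
  by apply/eqP => Eby; move/eqP: ne; apply; rewrite Eby.
by apply/existsP; exists m; rewrite hm hb ha.
Qed.

Lemma adjX (P P' : finType) (L : {set {set P}}) (L' : {set {set P'}}) (f : P -> P') x (z : BPt P P') :
  collinear (bigL L L' f) (inl (inl x)) z -> exists u', u' \in perp L' (f x) /\
     (z = inr (x, u') \/ z = inl (inr u')).
Proof.
case/andP => ne /existsP [l /andP [hl /andP [hx hz]]].
case/setUP: hl => /imsetP [B hB El]; subst l; first by case/imsetP: hx.
move: hB; rewrite inE => hB.
move: hx hz; rewrite !inE => /orP [/orP [/eqP [Ex] | /eqP //] | /eqP //].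
subst x => /orP [/orP [/eqP Ez | /eqP Ez] | /eqP Ez].
- by rewrite Ez eqxx in ne.
- by exists B.2; split => //; left; rewrite Ez; case: (B).
- by exists B.2; split => //; right.
Qed.

Lemma adjU (P P' : finType) (L : {set {set P}}) (L' : {set {set P'}}) (f : P -> P') u' (z : BPt P P') :
  collinear (bigL L L' f) (inl (inr u')) z -> exists w, u' \in perp L' (f w) /\
     (z = inr (w, u') \/ z = inl (inl w)).
Proof.
case/andP => ne /existsP [l /andP [hl /andP [hx hz]]].
case/setUP: hl => /imsetP [B hB El]; subst l; first by case/imsetP: hx.
move: hB; rewrite inE => hB.
move: hx hz; rewrite !inE => /orP [/orP [/eqP // | /eqP //] | /eqP [Ex]].
subst u' => /orP [/orP [/eqP Ez | /eqP Ez] | /eqP Ez].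
- by exists B.1; split => //; right.
- by exists B.1; split => //; left; rewrite Ez; case: (B).
- by rewrite Ez eqxx in ne.
Qed.

Lemma adjR (P P' : finType) (L : {set {set P}}) (L' : {set {set P'}}) (f : P -> P') p q :
  collinear (bigL L L' f) (inr p) (inr q) -> q.2 \in perp L' (f p.1).
Proof.
case/andP => ne /existsP [l /andP [hl /andP [hx hz]]].
case/setUP: hl => /imsetP [B hB El]; subst l; last first.
  move: hx hz ne; rewrite !inE => /orP [/orP [// | /eqP [->]] | //].
  by move=> /orP [/orP [// | /eqP [->]] | //]; rewrite eqxx.
case/imsetP: hx => p0 hp [Ep]; subst p0.
case/imsetP: hz => q0 hq [Eq]; subst q0.
move: hB; rewrite inE => /and5P [_ _ _ _ /andP [/eqP E2 _]].
have : q.2 \in [set p.2 | p in B] by apply/imsetP; exists q.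
rewrite E2 => /bigcapP; apply; apply/imsetP; exists p.1 => //.
by apply/imsetP; exists p.
Qed.

Lemma adjLR (P P' : finType) (L : {set {set P}}) (L' : {set {set P'}}) (f : P -> P') a q :
  collinear (bigL L L' f) (inl a) (inr q) -> a = inl q.1 \/ a = inr q.2.
Proof.
case/andP => ne /existsP [l /andP [hl /andP [hx hz]]].
case/setUP: hl => /imsetP [B hB El]; subst l; first by case/imsetP: hx.
move: hx hz; rewrite !inE => /orP [/orP [/eqP [->] | //] | /eqP [->]];
 move=> /orP [/orP [// | /eqP [->]] | //]; by [left | right].
Qed.

Lemma col_of (T : finType) (L : {set {set T}}) l a b :
  a != b -> l \in L -> a \in l -> b \in l -> collinear L a b.
Proof. by move=> nab hl ha hb; rewrite /collinear nab; apply/existsP; exists l; rewrite hl ha hb. Qed.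

Lemma spec_in (P P' : finType) (L : {set {set P}}) (L' : {set {set P'}}) (f : P -> P') p :
  p \in calP L' f ->
  [set (inl (inl p.1) : BPt P P'); inr p; inl (inr p.2)] \in bigL L L' f.
Proof. by move=> hp; apply/setUP; right; apply/imsetP; exists p. Qed.

Lemma colXU (P P' : finType) (L : {set {set P}}) (L' : {set {set P'}}) (f : P -> P') w u' :
  u' \in perp L' (f w) ->
  collinear (bigL L L' f) (inl (inl w)) (inl (inr u')) /\
  collinear (bigL L L' f) (inl (inr u')) (inl (inl w)).
Proof.
move=> hu; have hp : (w, u') \in calP L' f by rewrite inE.
have hl := spec_in L hp.
by split; apply: (col_of _ hl) => //; rewrite !inE eqxx ?orbT.
Qed.

Lemma colXR (P P' : finType) (L : {set {set P}}) (L' : {set {set P'}}) (f : P -> P') p :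
  p \in calP L' f ->
  collinear (bigL L L' f) (inl (inl p.1)) (inr p) /\
  collinear (bigL L L' f) (inl (inr p.2)) (inr p).
Proof.
move=> hp; have hl := spec_in L hp.
by split; apply: (col_of _ hl) => //; rewrite !inE eqxx ?orbT.
Qed.

Theorem lemma4p4 (P P' : finType) (L : {set {set P}}) (L' : {set {set P'}})
  (f : P -> P') (g : P' -> P) :
  is_GQ22 L -> is_GQ22 L' ->
  cancel f g -> cancel g f -> L' = [set f @: l | l : {set P} in L] ->
  (forall (x y : P) (v' : P'), (y, v') \in calP L' f -> x != y ->
     v' \notin perp L' (f x) ->
     dist_is (collinear (bigL L L' f)) (inl (inl x)) (inr (y, v')) 3) /\
  (forall (u' : P') (y : P) (v' : P'), (y, v') \in calP L' f -> u' != v' ->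
     y \notin perp L (g u') ->
     dist_is (collinear (bigL L L' f)) (inl (inr u')) (inr (y, v')) 3).
Proof.
move=> gq gq' fK gK EL; split.
- move=> x y v' hyv nxy nv; split.
  + have fxy : f x != f y by apply: contra nxy => /eqP /(can_inj fK) ->.
    have [u' [h1 h2]] := gq_common gq' fxy.
    exists [:: inl (inr u'); inl (inl y); inr (y, v')]; split => //=.
    rewrite (colXU L h1).1 (colXU L h2).2 /=.
    by rewrite (colXR L hyv).1.
  + case=> [|z1 [|z2 [|z3 s]]] //= _.
    * move=> /andP [h _]; apply/eqP => Ez; subst z1.
      case: (adjX h) => u' [hu [[E _]|//]].
      by rewrite E eqxx in nxy.
    * move=> /and3P [h1 h2 _]; apply/eqP => Ez; subst z2.
      case: (adjX h1) => u' [hu [E|E]]; subst z1.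
        by move: (adjR h2) => /= h; rewrite h in nv.
      by case: (adjLR h2) => // [[E]]; subst u'; rewrite hu in nv.
- move=> u' y v' hyv nuv ny; split.
  + have [t' [h1 h2]] := gq_common gq' nuv.
    have h1' : u' \in perp L' (f (g t')) by rewrite gK perpC.
    have h2' : v' \in perp L' (f (g t')) by rewrite gK perpC.
    exists [:: inl (inl (g t')); inl (inr v'); inr (y, v')]; split => //=.
    rewrite (colXU L h1').2 (colXU L h2').1 /=.
    by rewrite (colXR L hyv).2.
  + case=> [|z1 [|z2 [|z3 s]]] //= _.
    * move=> /andP [h _]; apply/eqP => Ez; subst z1.
      case: (adjU h) => w [hu [[_ E]|//]].
      by rewrite E eqxx in nuv.
    * move=> /and3P [h1 h2 _]; apply/eqP => Ez; subst z2.
      case: (adjU h1) => w [hu [E|E]]; subst z1.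
        rewrite collinearC in h2.
        by move: (adjR h2) => /= /(transl fK gK EL) h; rewrite h in ny.
      case: (adjLR h2) => // [[E]]; subst w.
      by rewrite (transl fK gK EL hu) in ny.
Qed.
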